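(* Let $\eta,\lambda\in\mathbb{C}$ and let $v\in\mathcal{F}_{\eta,\lambda}$ be a singular vector that is not a multiple of $|\eta\rangle$. Define $\kappa(v)=\max\{k\in\mathbb{Z}:\alpha_kv\neq0\}$. Then: 1. $\kappa(v)>0$. 2. $\alpha_{\kappa(v)}v$ is again a (nonzero) singular vector. 3. If $v$ is homogeneous of grade $d$ and $\mathcal{F}_{\eta,\lambda}$ contains no proper singular vector of grade strictly between $0$ and $d$, then the coefficient of $\alpha_{-d}|\eta\rangle$ in the expansion of $v$ in the monomial basis is nonzero.
   Context: The Heisenberg modes satisfy $[\alpha_m,\alpha_n]=m\delta_{m,-n}$. $\mathcal{F}_{\eta,\lambda}$ is the Fock space generated by the vacuum $|\eta\rangle$ with $\alpha_n|\eta\rangle=0$ for $n>0$ and $\alpha_0|\eta\rangle=\eta|\eta\rangle$. It is graded by the monomial basis $\alpha_{-\sigma_1}\cdots\alpha_{-\sigma_j}|\eta\rangle$, which has grade $\sum_i\sigma_i$. $\mathcal{F}_{\eta,\lambda}$ is a Virasoro module via $$L_n=\tfrac12\sum_k:\alpha_k\alpha_{n-k}:-\lambda(n+1)\alpha_n,$$ where normal ordering places positive-index modes to the right. A singular vector is a nonzero $L_0$-eigenvector $v$ with $L_nv=0$ for all $n>0$. It is proper if it is not a multiple of $|\eta\rangle$. *)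

(* Defs.v *)
From HB Require Import structures.
From mathcomp Require Import all_boot all_order all_algebra.
Set Implicit Arguments. Unset Strict Implicit. Unset Printing Implicit Defensive.
Import Order.TTheory GRing.Theory Num.Theory.
Local Open Scope ring_scope.

(* Concrete model of the Heisenberg Fock space F_{eta,lambda}:
   the monomial basis vector  alpha_{-s1} ... alpha_{-sj} |eta>  is indexed by
   the partition [:: s1; ...; sj] written as a non-increasing list of positive
   naturals; a vector is its coefficient function on such lists. *)

Definition is_part (m : seq nat) : bool :=
  sorted geq m && all (fun i => (0 < i)%N) m.

Definition grade (m : seq nat) : nat := sumn m.

Definition fvec (F : Type) := seq nat -> F.

Section Fock.
Variable F : numClosedFieldType.

Definition in_fock (v : fvec F) : Prop :=
  (forall m, v m != 0 -> is_part m) /\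
  exists N : nat, forall m, (N < grade m)%N -> v m = 0.

Definition nonzero (v : fvec F) : Prop := exists m, v m != 0.

Definition vac : fvec F := fun m => if m == [::] then 1 else 0.

Definition crea (n : nat) (v : fvec F) : fvec F :=
  fun m => if is_part m && (n \in m) then v (rem n m) else 0.

(* alpha_n (n > 0): n * d/dx_n, i.e. coefficient at m is n (mult_n m + 1) v(m+n) *)
Definition ann (n : nat) (v : fvec F) : fvec F :=
  fun m => if is_part m then (n * (count_mem n m).+1)%:R * v (sort geq (n :: m))
           else 0.

Definition alpha (eta : F) (k : int) (v : fvec F) : fvec F :=
  match k with
  | Posz 0 => fun m => eta * v m
  | Posz n => ann n v
  | Negz n => crea n.+1 v
  end.

Definition nop (eta : F) (a b : int) (v : fvec F) : fvec F :=
  if (0 < a) then alpha eta b (alpha eta a v) else alpha eta a (alpha eta b v).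

(* L_n = 1/2 sum_k :alpha_k alpha_{n-k}: - lam (n+1) alpha_n, for n >= 0.
   At a coefficient m of grade g only the terms with -g <= k <= n+g can be
   nonzero, so the infinite sum is evaluated over that finite range. *)
Definition Lvir (eta lam : F) (n : nat) (v : fvec F) : fvec F :=
  fun m =>
    let g := grade m in
    2^-1 * (\sum_(i < (2 * g + n).+1)
               nop eta (i%:Z - g%:Z) (n%:Z - (i%:Z - g%:Z)) v m)
    - lam * (n.+1)%:R * alpha eta n%:Z v m.

Definition singular (eta lam : F) (v : fvec F) : Prop :=
  [/\ in_fock v, nonzero v,
      (exists mu : F, forall m, Lvir eta lam 0 v m = mu * v m) &
      (forall n : nat, (0 < n)%N -> forall m, Lvir eta lam n v m = 0)].

Definition proper_sv (v : fvec F) : Prop :=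
  ~ exists c : F, forall m, v m = c * vac m.

Definition homogeneous (v : fvec F) (d : nat) : Prop :=
  forall m, v m != 0 -> grade m = d.

End Fock.

(* Main.v *)
Require Import Defs.
From HB Require Import structures.
From mathcomp Require Import all_boot all_order all_algebra.
From mathcomp Require Import zify ring lra.
From Stdlib Require Import FunctionalExtensionality Classical.
Import Order.TTheory GRing.Theory Num.Theory.
Set Implicit Arguments. Unset Strict Implicit.

Lemma geq_tot : total geq. Proof. by move=> a b /=; rewrite leq_total. Qed.
Lemma geq_tr : transitive geq. Proof. by move=> a b c /= h1 h2; apply: leq_trans h2 h1. Qed.
Lemma geq_anti : antisymmetric geq.
Proof. by move=> a b /andP[h1 h2]; apply: anti_leq; rewrite /= in h1 h2; rewrite h1 h2. Qed.

Lemma psort (s : seq nat) : perm_eq (sort geq s) s.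
Proof. by rewrite perm_sort. Qed.

Lemma sorted_perm_eq (s1 s2 : seq nat) :
  sorted geq s1 -> sorted geq s2 -> perm_eq s1 s2 -> s1 = s2.
Proof. exact: (sorted_eq geq_tr geq_anti). Qed.

Lemma part_sort k m : (0 < k)%N -> is_part m -> is_part (sort geq (k :: m)).
Proof.
move=> k0 /andP[_ am]; rewrite /is_part sort_sorted ?geq_tot //=.
by rewrite (perm_all _ (psort _)) /= k0.
Qed.

Lemma part_rem n m : is_part m -> is_part (rem n m).
Proof.
move=> /andP[sm am]; rewrite /is_part (subseq_sorted geq_tr (rem_subseq _ _) sm) /=.
by apply/allP=> x /(mem_subseq (rem_subseq _ _)) xm; apply: (allP am).
Qed.

Lemma grade_sort k m : grade (sort geq (k :: m)) = (k + grade m)%N.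
Proof. by rewrite /grade (perm_sumn (psort _)). Qed.

Lemma count_sort j k m : count_mem j (sort geq (k :: m)) = ((k == j) + count_mem j m)%N.
Proof. by rewrite (permP (psort _)). Qed.

Lemma sort_sort j k m : sort geq (k :: sort geq (j :: m)) = sort geq (j :: sort geq (k :: m)).
Proof.
apply: sorted_perm_eq; rewrite ?sort_sorted ?geq_tot //.
apply/permP=> a; rewrite !(permP (psort _)) /= !(permP (psort _)) /=.
by rewrite addnCA.
Qed.

Lemma sort_id m : is_part m -> sort geq m = m.
Proof. by move=> /andP[sm _]; apply: (sorted_sort geq_tr sm). Qed.

Lemma sort_rem k m : is_part m -> k \in m -> sort geq (k :: rem k m) = m.
Proof.
move=> pm km; rewrite -{2}(sort_id pm).
apply/(perm_sortP geq_tot geq_tr geq_anti).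
by rewrite perm_sym perm_to_rem.
Qed.

Lemma rem_sort k m : is_part m -> rem k (sort geq (k :: m)) = m.
Proof.
move=> pm; have ks : k \in sort geq (k :: m) by rewrite mem_sort mem_head.
apply: sorted_perm_eq.
- apply: (subseq_sorted geq_tr (rem_subseq _ _)); exact: (sort_sorted geq_tot).
- by case/andP: pm.
rewrite -(perm_cons k); have h1 := perm_to_rem ks; rewrite perm_sym in h1.
exact: (perm_trans h1 (psort _)).
Qed.

Lemma rem_sort2 n k m : is_part m -> n != k -> n \in m ->
  rem n (sort geq (k :: m)) = sort geq (k :: rem n m).
Proof.
move=> pm nk nm; have ns : n \in sort geq (k :: m) by rewrite mem_sort inE nm orbT.
apply: sorted_perm_eq.
- apply: (subseq_sorted geq_tr (rem_subseq _ _)); exact: (sort_sorted geq_tot).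
- exact: (sort_sorted geq_tot).
rewrite -(perm_cons n); have h1 := perm_to_rem ns; rewrite perm_sym in h1.
apply: (perm_trans h1); apply: (perm_trans (psort _)); apply/permP=> a /=.
rewrite (permP (psort _)) /=.
by rewrite (permP (perm_to_rem nm)) /= addnCA.
Qed.

Lemma count_rem (j n : nat) (m : seq nat) : n \in m -> count_mem j m = ((n == j) + count_mem j (rem n m))%N.
Proof. by move=> nm; rewrite (permP (perm_to_rem nm)). Qed.

Lemma mem_le_sumn (x : nat) (m : seq nat) : x \in m -> (x <= sumn m)%N.
Proof.
elim: m => //= y m IH; rewrite inE => /orP[/eqP->|/IH h]; first exact: leq_addr.
by apply: leq_trans h (leq_addl _ _).
Qed.

Local Open Scope ring_scope.

Section S.
Variable F : numClosedFieldType.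
Variables eta lam : F.

Definition pv (v : fvec F) := forall m, ~~ is_part m -> v m = 0.

Lemma comm1 (k : nat) (x : int) (v : fvec F) m : (0 < k)%N -> pv v ->
  alpha eta x (ann k v) m =
  ann k (alpha eta x v) m - (if x == - k%:Z then k%:R else 0) * v m.
Proof.
move=> k0 hv; case: x => [[|j]|j].
- have -> : (0%:Z == - k%:Z) = false by apply/eqP; lia.
  rewrite /= /ann; case: ifP => _; ring.
- have -> : ((j.+1)%:Z == - k%:Z) = false by apply/eqP; lia.
  rewrite /= /ann; case pm: (is_part m); last by rewrite mul0r subr0.
  rewrite !part_sort // !count_sort sort_sort mul0r subr0 !mulrA -!natrM.
  congr (_%:R * _); rewrite /= [k == _]eq_sym.
  by case: (j.+1 =P k) => [<-|_] /=; nia.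
- have -> : (Negz j == - k%:Z) = (j.+1 == k) by apply/eqP/eqP; lia.
  rewrite /= /crea /ann; case pm: (is_part m) => /=; last by rewrite hv ?pm // mulr0 subr0.
  rewrite part_rem // part_sort //.
  case: (j.+1 =P k) => [<-|nk] /=.
  + rewrite mem_sort mem_head rem_sort //.
    case jm: (j.+1 \in m).
    * rewrite sort_rem // (count_rem j.+1 jm) eqxx.
      rewrite -mulrBl; congr (_ * _); rewrite -natrB; last by nia.
      congr (_%:R); rewrite add1n; move: (count_mem _ _) => c; nia.
    * by rewrite (count_memPn (negbT jm)) muln1 subrr.
  + rewrite mem_sort inE.
    have -> : (j.+1 == k) = false by apply/eqP.
    case jm: (j.+1 \in m) => /=; last by rewrite mulr0 mul0r subr0.
    rewrite rem_sort2 //; last by apply/eqP.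
    rewrite (count_rem k jm); have -> : (j.+1 == k) = false by apply/eqP.
    by rewrite mul0r subr0.
Qed.

Definition cf (x : int) (k : nat) : F := if x == - k%:Z then k%:R else 0.

Lemma alpha_lin x (f g : fvec F) c m :
  alpha eta x (fun m => f m - c * g m) m = alpha eta x f m - c * alpha eta x g m.
Proof.
case: x => [[|j]|j] /=; first ring.
- rewrite /ann; case: ifP => _; ring.
- rewrite /crea; case: ifP => _; ring.
Qed.

Lemma pv_alpha x v : pv v -> pv (alpha eta x v).
Proof.
move=> hv m pm; case: x => [[|j]|j] /=; first by rewrite hv // mulr0.
- by rewrite /ann (negbTE pm).
- by rewrite /crea (negbTE pm).
Qed.

Lemma pv_ann k v : pv (ann k v).
Proof. by move=> m pm; rewrite /ann (negbTE pm). Qed.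

Lemma comm_nop k a b v m : (0 < k)%N -> pv v ->
  nop eta a b (ann k v) m =
  ann k (nop eta a b v) m - cf b k * alpha eta a v m - cf a k * alpha eta b v m.
Proof.
move=> k0 hv; rewrite /nop; case: ifP => a0.
- have ca : cf a k = 0 by rewrite /cf; have -> : (a == - k%:Z) = false by apply/eqP; lia.
  have e : alpha eta a (ann k v) = ann k (alpha eta a v).
    by apply functional_extensionality => m'; rewrite comm1 // -/(cf a k) ca mul0r subr0.
  by rewrite e (comm1 _ _ k0 (pv_alpha _ hv)) ca mul0r subr0 /cf.
- have e : alpha eta b (ann k v) = fun m => ann k (alpha eta b v) m - cf b k * v m.
    by apply functional_extensionality => m'; rewrite comm1.
  rewrite e alpha_lin (comm1 _ _ k0 (pv_alpha _ hv)) /cf; ring.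
Qed.

Lemma alpha_neg_big y (f : fvec F) m : y < - (sumn m)%:Z -> alpha eta y f m = 0.
Proof.
case: y => [j|j] h; first by exfalso; lia.
rewrite /= /crea; have -> : (j.+1 \in m) = false.
  apply/negP => /mem_le_sumn; move: h; rewrite NegzE; lia.
by rewrite andbF.
Qed.

Lemma nop_out n x (w : fvec F) m :
  (x < - (grade m)%:Z) \/ (n%:Z + (grade m)%:Z < x) -> nop eta x (n%:Z - x) w m = 0.
Proof.
rewrite /nop /grade; case=> h.
- have -> : (0 < x) = false by apply/negP; lia.
  exact: alpha_neg_big.
- have -> : (0 < x) = true by apply/idP; lia.
  apply: alpha_neg_big; lia.
Qed.

Lemma Lrange n (v : fvec F) m G : (grade m <= G)%N ->
  Lvir eta lam n v m =
  2^-1 * (\sum_(i < (2 * G + n).+1)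
            nop eta (i%:Z - G%:Z) (n%:Z - (i%:Z - G%:Z)) v m)
  - lam * (n.+1)%:R * alpha eta n%:Z v m.
Proof.
move=> hG; rewrite /Lvir; congr (_ * _ - _).
set g := grade m; have -> : G = (g + (G - g))%N by rewrite subnKC.
move: (G - g)%N => e.
set T := fun i : nat => nop eta (i%:Z - (g + e)%:Z) (n%:Z - (i%:Z - (g + e)%:Z)) v m.
rewrite -(big_mkord xpredT T) -(big_mkord xpredT (fun i : nat => nop eta (i%:Z - g%:Z) (n%:Z - (i%:Z - g%:Z)) v m)).
rewrite [RHS](big_cat_nat _ (n:=e)) //=; last by lia.
rewrite [X in _ = _ + X](big_cat_nat _ (n:=e + (2 * g + n).+1)) //=; [|lia|lia].
have h1 : \sum_(0 <= i < e) T i = 0.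
  rewrite big_nat_cond big1 // => i /andP[/andP[_ h] _]; rewrite /T nop_out //; left; rewrite -/g; lia.
have h3 : \sum_(e + (2 * g + n).+1 <= i < (2 * (g + e) + n).+1) T i = 0.
  rewrite big_nat_cond big1 // => i /andP[/andP[h _] _]; rewrite /T nop_out //; right; rewrite -/g; lia.
rewrite h1 h3 add0r addr0.
have := @big_addn _ 0 +%R 0%N (e + (2 * g + n).+1) e xpredT T; rewrite add0n => ->; rewrite addKn; apply: eq_bigr => i _.
rewrite /T; have -> : ((i + e)%:Z - (g + e)%:Z) = (i%:Z - g%:Z) by lia.
by [].
Qed.

Lemma dsum1 n k (v : fvec F) m G : (k <= G)%N ->
  \sum_(i < (2 * G + n).+1) cf (n%:Z - (i%:Z - G%:Z)) k * alpha eta (i%:Z - G%:Z) v m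
  = k%:R * alpha eta (n + k)%:Z v m.
Proof.
move=> kG; have h : (n + k + G < (2 * G + n).+1)%N by lia.
rewrite (bigD1 (Ordinal h)) //= big1 ?addr0.
  have -> : ((n + k + G)%:Z - G%:Z) = (n + k)%:Z by lia.
  by rewrite /cf; have -> : (n%:Z - (n + k)%:Z == - k%:Z) = true by apply/eqP; lia.
move=> i ne; rewrite /cf; have -> : (n%:Z - (i%:Z - G%:Z) == - k%:Z) = false; last by rewrite mul0r.
apply/eqP => e; move/eqP: ne; apply; apply: val_inj => /=; lia.
Qed.

Lemma dsum2 n k (v : fvec F) m G : (k <= G)%N ->
  \sum_(i < (2 * G + n).+1) cf (i%:Z - G%:Z) k * alpha eta (n%:Z - (i%:Z - G%:Z)) v m
  = k%:R * alpha eta (n + k)%:Z v m.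
Proof.
move=> kG; have h : (G - k < (2 * G + n).+1)%N by lia.
rewrite (bigD1 (Ordinal h)) //= big1 ?addr0.
  have -> : ((G - k)%N%:Z - G%:Z) = - k%:Z by lia.
  have -> : (n%:Z - - k%:Z) = (n + k)%:Z by lia.
  by rewrite /cf eqxx.
move=> i ne; rewrite /cf; have -> : (i%:Z - G%:Z == - k%:Z) = false; last by rewrite mul0r.
apply/eqP => e; move/eqP: ne; apply; apply: val_inj => /=; lia.
Qed.

Lemma Lcomm n k (v : fvec F) m : (0 < k)%N -> pv v -> is_part m ->
  Lvir eta lam n (ann k v) m =
  ann k (Lvir eta lam n v) m - k%:R * alpha eta (n + k)%:Z v m.
Proof.
move=> k0 hv pm.
set G := grade (sort geq (k :: m)).
have hG : G = (k + grade m)%N by rewrite /G grade_sort.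
have kG : (k <= G)%N by rewrite hG leq_addr.
rewrite (@Lrange n (ann k v) m G); last by rewrite hG leq_addl.
rewrite {3}/ann pm (@Lrange n v (sort geq (k :: m)) G) //.
under eq_bigr => i _ do rewrite (comm_nop _ _ _ k0 hv).
rewrite !sumrB (dsum1 _ _ _ kG) (dsum2 _ _ _ kG).
rewrite (comm1 _ _ k0 hv).
have -> : (n%:Z == - k%:Z) = false by apply/eqP; lia.
rewrite mul0r subr0 {2}/ann pm.
under eq_bigr => i _ do rewrite /ann pm.
rewrite -mulr_sumr.
set c := ((k * _)%:R : F).
by field.
Qed.
End S.

Lemma ex_max (P : nat -> Prop) N j0 : P j0 -> (forall j, P j -> (j <= N)%N) ->
  exists j, P j /\ forall j', (j < j')%N -> ~ P j'.
Proof.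
move=> pj0 hb.
suff H : forall d j, (N - j <= d)%N -> P j -> exists j, P j /\ forall j', (j < j')%N -> ~ P j'.
  exact: (H N j0 (leq_subr _ _) pj0).
elim=> [|d IH] j hd pj; case: (classic (exists j', (j < j')%N /\ P j')) => [[j' [lt pj']]|no].
- have := hb _ pj'; lia.
- by exists j; split => // j' lt pj'; apply: no; exists j'.
- apply: (IH j') => //; have := hb _ pj'; lia.
- by exists j; split => // j' lt pj'; apply: no; exists j'.
Qed.

Section T.
Variable F : numClosedFieldType.
Variables eta lam : F.

Lemma alpha_pos j (v : fvec F) : (0 < j)%N -> alpha eta j%:Z v = ann j v.
Proof. by case: j. Qed.

Lemma fock_pv (v : fvec F) : in_fock v -> pv v.
Proof.
move=> [h _] m pm; case: (v m =P 0) => // /eqP /h; by rewrite (negbTE pm).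
Qed.

Lemma Lvir_np n (w : fvec F) m : pv w -> ~~ is_part m -> Lvir eta lam n w m = 0.
Proof.
move=> hw pm; rewrite /Lvir big1 ?mulr0 ?sub0r.
  by rewrite (pv_alpha _ _ hw) // mulr0 oppr0.
move=> i _; rewrite /nop; case: ifP => _; apply: pv_alpha => //; exact: pv_alpha.
Qed.

Lemma sing_ann (v : fvec F) k : singular eta lam v -> (0 < k)%N -> nonzero (ann k v) ->
  (forall j, (k < j)%N -> forall m, ann j v m = 0) ->
  singular eta lam (ann k v).
Proof.
move=> [[hp [N hN]] nzv [mu hmu] hL] k0 nz hmax.
have hv : pv v by apply: fock_pv; split => //; exists N.
split => //.
- split.
    by move=> m; rewrite /ann; case: ifP => // _; rewrite eqxx.
  exists N => m hm; rewrite /ann; case: ifP => // _; rewrite hN ?mulr0 //.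
  rewrite grade_sort; lia.
- exists (mu - k%:R) => m; case pm: (is_part m); last first.
    have -> : Lvir eta lam 0 (ann k v) m = 0 by apply: Lvir_np; [exact: pv_ann | by rewrite pm].
    by rewrite /ann pm mulr0.
  rewrite Lcomm // add0n alpha_pos // /ann pm hmu; ring.
- move=> n n0 m; case pm: (is_part m); last by apply: Lvir_np; [exact: pv_ann | by rewrite pm].
  rewrite Lcomm // alpha_pos ?addn_gt0 ?n0 // hmax; last by lia.
  by rewrite /ann pm hL // mulr0 mulr0 subrr.
Qed.

Lemma kappa_ex (v : fvec F) : singular eta lam v -> proper_sv v ->
  exists k, [/\ (0 < k)%N, nonzero (ann k v),
     (forall j, (k < j)%N -> forall m, ann j v m = 0) & singular eta lam (ann k v)].
Proof.
move=> sv pr; have [[hp [N hN]] nzv _ _] := sv.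
have hv : pv v by apply: fock_pv; split => //; exists N.
have [m0 [ne nz]] : exists m, m != [::] /\ v m != 0.
  apply: NNPP => hn; apply: pr; exists (v [::]) => m; rewrite /vac.
  case: eqP => [->|ne]; first by rewrite mulr1.
  rewrite mulr0; case: (v m =P 0) => // /eqP nz'; exfalso; apply: hn; exists m.
  by split => //; apply/eqP.
have pm0 := hp _ nz.
case: m0 ne nz pm0 => [//|j m1] _ nz pm0.
have j0 : (0 < j)%N by move: pm0 => /andP[_ /andP[]].
pose P j := (0 < j)%N /\ nonzero (ann j v).
have Pj : P j.
  split => //; exists (rem j (j :: m1)); rewrite /ann part_rem // sort_rem ?mem_head //.
  by rewrite mulf_neq0 // pnatr_eq0 muln_eq0 negb_or -lt0n j0.
have hb : forall j, P j -> (j <= N)%N.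
  move=> i [i0 [m hm]]; move: hm; rewrite /ann; case: ifP => _; last by rewrite eqxx.
  case: (leqP i N) => // lt; rewrite hN ?mulr0 ?eqxx // grade_sort; lia.
have [k [[k0 nzk] hk]] := ex_max Pj hb.
have hmax : forall j, (k < j)%N -> forall m, ann j v m = 0.
  move=> i lt m; apply/eqP; apply/negP => /negP nz'; apply: (hk i lt); split; first lia.
  by exists m.
exists k; split => //; exact: sing_ann.
Qed.
End T.

Unset Implicit Arguments.

Theorem mainTheorem5 (F : numClosedFieldType) (eta lam : F) (v : fvec F) :
  singular eta lam v -> proper_sv v ->
  (exists k : int,
      [/\ 0 < k,
          nonzero (alpha eta k v),
          (forall j : int, k < j -> forall m, alpha eta j v m = 0) &
          singular eta lam (alpha eta k v)])
  /\
  (forall d : nat, homogeneous v d ->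
     (forall (w : fvec F) (e : nat), (0 < e < d)%N -> homogeneous w e ->
        singular eta lam w -> ~ proper_sv w) ->
     v [:: d] != 0).
Proof.
move=> sv pr; have [k [k0 nzk hmax sk]] := kappa_ex sv pr.
split.
  exists k%:Z; rewrite alpha_pos //; split => //.
  move=> [j|j] lt m; last by exfalso; move: lt; rewrite NegzE; lia.
  rewrite alpha_pos; last by lia.
  apply: hmax; lia.
move=> d hom hno.
have [m0 nz0] := nzk.
have pm0 : is_part m0 by move: nz0; rewrite /ann; case: ifP => //; rewrite eqxx.
have nzv : v (sort geq (k :: m0)) != 0.
  by move: nz0; rewrite /ann pm0; apply: contraNN => /eqP ->; rewrite mulr0.
have gd := hom _ nzv; rewrite grade_sort in gd.
have homk : homogeneous (ann k v) (d - k).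
  move=> m nz; have pm : is_part m by move: nz; rewrite /ann; case: ifP => //; rewrite eqxx.
  have : v (sort geq (k :: m)) != 0.
    by move: nz; rewrite /ann pm; apply: contraNN => /eqP ->; rewrite mulr0.
  move/hom; rewrite grade_sort; lia.
have kd : k = d.
  case: (ltnP k d) => lt; last by lia.
  exfalso; apply: (hno _ (d - k)%N _ homk sk); first by lia.
  move=> [c hc]; have g0 := homk _ nz0; move: nz0; rewrite hc /vac.
  case: (m0 =P [::]) => [e|_]; last by rewrite mulr0 eqxx.
  by move: g0; rewrite e /grade /=; lia.
subst k.
have g0 : grade m0 = 0%N by lia.
have e0 : m0 = [::].
  case: m0 pm0 g0 {nz0 nzv gd} => // x s /andP[_ /andP[x0 _]] /=; rewrite /grade /=; lia.
move: nzv; rewrite e0 sort_id //.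
by rewrite /is_part /= andbT.
Qed.
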